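(* If a set $W\subseteq V$ with $|W|=3$ can be generated from some connected pair, then there exists $X\supseteq W$ such that $D[X]$ is a directed sub-block, and some $i\in W$ is reachable from all other nodes both in $D[W]$ and in $D[X]$.
   Context: $D=(V,A)$ is a directed graph. $\mathrm{IN}(X)$ is the set of nodes from which some member of $X$ is reachable by a directed path. For disjoint nonempty $X,Y,Z$, $f_E(X,Y,Z)=1$ iff $\mathrm{IN}(X)\cap\mathrm{IN}(Y)=\emptyset$ computed in $D-Z$; node $j$ is dynamically partitioning relative to $k$ and $Y$ iff $f_E(\{k\},Y,\{j\})=1$. A connected pair is a set $\{i,j\}$ joined by an arc in some direction. A set $W_n$ of size $n$ can be generated from $W_m$ of size $m$, $2\le m<n$, iff there are sets $W_m\subset\dots\subset W_n$ with $W_{l+1}=W_l\cup\{k\}$, $k\in V\setminus W_l$, such that there is an arc from $k$ to some $j\in W_l$ that is not dynamically partitioning relative to $k$ and $W_l\setminus\{j\}$. $D[W]$ is the subgraph induced on $W$; reachability in $D[W]$ is via directed paths inside $D[W]$. A graph is biconnected if it has at least three vertices, is connected and remains connected after deleting any one vertex. $D[X]$ is a directed sub-block if some node of $X$ is reachable within $D[X]$ from all other nodes and the underlying undirected graph of $D[X]$ is biconnected. *)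

(* Defs.v *)
(* Directed graph D = (V, A): V a finite type, A : rel V,
   with an arc from x to y iff A x y. *)
From mathcomp Require Import all_boot.
Set Implicit Arguments. Unset Strict Implicit. Unset Printing Implicit Defensive.

Section Defs.
Variables (V : finType) (A : rel V).

(* u reaches v by a directed path inside the induced subgraph D[S]
   (both endpoints in S; trivial path allowed). *)
Definition reach_in (S : {set V}) (u v : V) : bool :=
  [&& u \in S, v \in S &
      connect (fun x y => [&& A x y, x \in S & y \in S]) u v].

(* IN(X) computed in D - Z : nodes (of D - Z) from which some member of X
   is reachable by a directed path in D - Z. *)
Definition IN_minus (Z X : {set V}) : {set V} :=
  [set u | [exists x in X, reach_in (~: Z) u x]].

Definition f_E (X Y Z : {set V}) : bool :=
  IN_minus Z X :&: IN_minus Z Y == set0.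

Definition dyn_partitioning (j k : V) (Y : {set V}) : bool :=
  f_E [set k] Y [set j].

Definition gen_step (W W' : {set V}) : Prop :=
  exists k, k \notin W /\ W' = k |: W /\
    exists j, j \in W /\ A k j /\ ~~ dyn_partitioning j k (W :\ j).

Inductive gen_chain : {set V} -> {set V} -> Prop :=
| gen_chain_one W W' : gen_step W W' -> gen_chain W W'
| gen_chain_more W W' W'' : gen_chain W W' -> gen_step W' W'' -> gen_chain W W''.

Definition generated_from (Wm Wn : {set V}) : Prop :=
  2 <= #|Wm| /\ #|Wm| < #|Wn| /\ gen_chain Wm Wn.

Definition connected_pair (P : {set V}) : Prop :=
  exists i j, i != j /\ P = [set i; j] /\ (A i j || A j i).

Definition uadj (x y : V) : bool := (x != y) && (A x y || A y x).

Definition uconnected (S : {set V}) : Prop :=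
  forall u v, u \in S -> v \in S ->
    connect (fun x y => [&& uadj x y, x \in S & y \in S]) u v.

Definition biconnected (S : {set V}) : Prop :=
  3 <= #|S| /\ uconnected S /\ (forall v, v \in S -> uconnected (S :\ v)).

Definition directed_subblock (X : {set V}) : Prop :=
  (exists r, r \in X /\ forall u, u \in X -> u != r -> reach_in X u r)
  /\ biconnected X.

End Defs.

(* Main.v *)
From mathcomp Require Import all_boot zify.
Require Import Defs.
Set Implicit Arguments. Unset Strict Implicit.
Section H.
Variable T : finType.

Lemma connect_neq (e : rel T) x y : connect e x y ->
  connect (fun a b => e a b && (a != b)) x y.
Proof.
move/connectP=> [p]; elim: p x => [|z p IH] x /=; first by move=> _ ->.
case/andP => exz pz ly; case: (eqVneq x z) => [->|nxz]; first exact: IH.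
apply: connect_trans (connect1 _) (IH _ pz ly); by rewrite exz nxz.
Qed.

Lemma path_restrict (e : rel T) (S : {set T}) h t :
  path e h t -> all (mem S) (h :: t) ->
  path (fun a b => [&& e a b, a \in S & b \in S]) h t.
Proof.
elim: t h => [|z t IH] h //= /andP[ehz pt] /and3P[hS zS tS].
by rewrite ehz hS zS /= IH //= zS.
Qed.

Lemma path_all_conn (e : rel T) (S : {set T}) h t : symmetric e ->
  path e h t -> all (mem S) (h :: t) -> forall x y, x \in h :: t -> y \in h :: t ->
  connect (fun a b => [&& e a b, a \in S & b \in S]) x y.
Proof.
move=> sym pt aS x y xin yin.
have pS := path_restrict pt aS.
have symS : symmetric (fun a b => [&& e a b, a \in S & b \in S]).
  by move=> a b; rewrite sym; case: (a \in S); case: (b \in S); rewrite ?andbT ?andbF.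
have cx := path_connect pS xin; have cy := path_connect pS yin.
apply: connect_trans _ cy; by rewrite sym_connect_sym.
Qed.

Lemma path_to_last (e : rel T) x p y : path e x p -> y \in x :: p ->
  connect e y (last x p).
Proof.
move=> pp yin; move: pp; case/splitPl: yin => p1 p2 ly; rewrite cat_path last_cat ly => /andP[_ p2p].
by apply/connectP; exists p2.
Qed.

Lemma cycle_conn (e : rel T) (c : seq T) : symmetric e -> uniq c -> cycle e c ->
  forall v, v \in c -> forall x y, x \in [set z in c] :\ v -> y \in [set z in c] :\ v ->
  connect (fun a b => [&& e a b, a \in [set z in c] :\ v & b \in [set z in c] :\ v]) x y.
Proof.
move=> sym uc cc v vc; case: (rot_to vc) => i p rotp.
have : uniq (v :: p) by rewrite -rotp rot_uniq.
have : cycle e (v :: p) by rewrite -rotp rot_cycle.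
have memp : forall z, (z \in c) = (z \in v :: p) by move=> z; rewrite -rotp mem_rot.
case: p rotp memp => [|h t] rotp memp.
  by move=> _ _ x y; rewrite !inE memp inE => /andP[/negbTE-> ].
rewrite /= => /andP[_]; rewrite rcons_path => /andP[pt _] /andP[vnin _] x y xin yin.
have inS : forall z, z \in h :: t -> z \in [set z in c] :\ v.
  by move=> z zin; rewrite !inE memp inE zin orbT andbT; apply: contraNneq vnin => <-.
apply: (path_all_conn sym pt).
- by apply/allP => z /inS.
- by move: xin; rewrite !inE memp inE => /andP[/negbTE ->].
- by move: yin; rewrite !inE memp inE => /andP[/negbTE ->].
Qed.


Lemma cycle_conn0 (e : rel T) (c : seq T) : symmetric e -> cycle e c ->
  forall x y, x \in c -> y \in c ->
  connect (fun a b => [&& e a b, a \in [set z in c] & b \in [set z in c]]) x y.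
Proof.
move=> sym; case: c => [|h t] cc x y xin yin //.
move: cc; rewrite /= rcons_path => /andP[pt _].
apply: (path_all_conn (S := [set z in h :: t]) sym pt _ xin yin).
apply/allP => z zin; have : z \in [set z0 in h :: t] by rewrite inE. 
by [].
Qed.

End H.
Section H2.
Variable T : finType.

Lemma uniq_split (u : T) a b : uniq (u :: a ++ b) -> uniq (last u a :: b).
Proof.
rewrite -cat_cons cat_uniq => /and3P[_ nh ub]; rewrite /= ub andbT.
apply: contra nh => xb; apply/hasP; exists (last u a) => //; exact: mem_last.
Qed.

Lemma disj_paths (e : rel T) k o : forall q2 u q1,
  path e u q1 -> last u q1 = k -> uniq (u :: q1) ->
  path e u q2 -> last u q2 = o -> uniq (u :: q2) ->
  exists w p1 p2, [/\ path e w p1, last w p1 = k, path e w p2, last w p2 = o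
     & uniq (w :: p1 ++ p2)].
Proof.
move=> q2; move: {2}(size q2).+1 (ltnSn (size q2)) => n.
elim: n q2 => // n IH q2 sz u q1 pq1 lq1 uq1 pq2 lq2 uq2.
case: (boolP (has (mem (u :: q1)) q2)) => [/hasP [x xq2 xq1] | nh]; last first.
  exists u, q1, q2; split => //.
  by rewrite -cat_cons cat_uniq uq1 nh /=; case/andP: uq2.
have xin2 : x \in u :: q2 by rewrite inE xq2 orbT.
move: pq1 lq1 uq1; case/splitPl: xq1 => a b la.
rewrite cat_path last_cat la => /andP[_ pb] lb ub; have := uniq_split ub; rewrite la => ub'.
move: pq2 lq2 uq2 sz xq2; case/splitPl: xin2 => c d lc.
rewrite cat_path last_cat lc => /andP[_ pd] ld ud sz xq2.
have ud' := uniq_split ud; rewrite lc in ud'.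
apply: (IH d _ x b) => //.
case: c lc ud sz xq2 => [/= xu|z c _ _]; last by rewrite size_cat /= => sz _; lia.
by move=> /andP[]; rewrite xu => /negP nd _ _ xd; case: nd.
Qed.
End H2.
Lemma connect_uniq (T : finType) (e : rel T) u k : connect e u k ->
  exists q, [/\ path e u q, last u q = k & uniq (u :: q)].
Proof. by case/connectP => p pp ->; case: (shortenP pp) => q pq uq _; exists q. Qed.

Lemma pathN (T : finType) (A : rel T) (N : {set T}) x p :
  path (fun a b => [&& A a b, a \in N & b \in N]) x p -> forall y, y \in p -> y \in N.
Proof.
elim: p x => [|z p IH] x //= /andP[/and3P[_ _ zN] pp] y; rewrite inE => /orP[/eqP->//|].
exact: IH pp y.
Qed.

Lemma path_restrictA (T : finType) (A : rel T) (N S : {set T}) h t :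
  path (fun a b => [&& A a b, a \in N & b \in N]) h t -> all (mem S) (h :: t) ->
  path (fun a b => [&& A a b, a \in S & b \in S]) h t.
Proof.
elim: t h => [|z t IH] h //= /andP[/and3P[ehz _ _] pt] /and3P[hS zS tS].
by rewrite ehz hS zS /= IH //= zS.
Qed.

Lemma step_card (V : finType) (A : rel V) W W' : gen_step A W W' -> #|W'| = #|W|.+1.
Proof. by case=> k [kW [-> _]]; rewrite cardsU1 kW. Qed.

Lemma chain_card (V : finType) (A : rel V) W W' : gen_chain A W W' -> #|W| < #|W'|.
Proof.
elim=> [X Y /step_card->//|X Y Z _ IH /step_card->]; exact: ltnW.
Qed.

Lemma to_uadj (V : finType) (A : rel V) (S : {set V}) x y :
  connect (fun a b => [&& A a b || A b a, a \in S & b \in S]) x y ->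
  connect (fun a b => [&& uadj A a b, a \in S & b \in S]) x y.
Proof.
move/connect_neq; apply: connect_sub => a b /andP[/and3P[eab aS bS] nab].
by apply: connect1; rewrite /uadj nab eab aS bS.
Qed.

Lemma core (V : finType) (A : rel V) (j o k : V) :
  j != o -> (A j o || A o j) -> k != j -> k != o -> A k j ->
  ~~ dyn_partitioning A j k [set o] -> #|k |: [set j; o]| = 3 ->
  exists X : {set V}, k |: [set j; o] \subset X /\ directed_subblock A X /\
    exists i, i \in k |: [set j; o] /\
      (forall u, u \in k |: [set j; o] -> u != i -> reach_in A (k |: [set j; o]) u i) /\
      (forall u, u \in X -> u != i -> reach_in A X u i).
Proof.
move=> njo ajo nkj nko akj ndp W3.
set N := ~: [set j].
set e' := fun a b => [&& A a b, a \in N & b \in N].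
have [u0 uk uo] : exists2 u, connect e' u k & connect e' u o.
  move: ndp; rewrite /dyn_partitioning /f_E => /set0Pn [u].
  rewrite inE => /andP[]; rewrite !inE.
  move=> /existsP [x /andP[/set1P -> /and3P[_ _ c1]]].
  move=> /existsP [y /andP[/set1P -> /and3P[_ _ c2]]].
  by exists u.
have [q1 [pq1 lq1 uq1]] := connect_uniq uk.
have [q2 [pq2 lq2 uq2]] := connect_uniq uo.
have [w [p1 [p2 [pp1 lp1 pp2 lp2 uw]]]] := disj_paths pq1 lq1 uq1 pq2 lq2 uq2.
have kN : k \in N by rewrite !inE.
have wN : w \in N.
  by move: pp1 lp1; case: (p1) => [_ /= ->|z p /= /andP[/and3P[]]].
have allN : forall y, y \in w :: p1 ++ p2 -> y \in N.
  move=> y; rewrite inE mem_cat => /or3P[/eqP->//|/(pathN pp1)|/(pathN pp2)] //.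
set c := j :: rev (w :: p1) ++ p2.
set X := [set z in c].
have jnot : j \notin w :: p1 ++ p2 by apply/negP => /allN; rewrite !inE eqxx.
have uc : uniq c.
  rewrite /c cons_uniq.
  have -> : uniq (rev (w :: p1) ++ p2) = uniq (w :: p1 ++ p2).
    by apply: perm_uniq; rewrite -cat_cons perm_cat2r perm_rev.
  have -> : (j \in rev (w :: p1) ++ p2) = (j \in w :: p1 ++ p2).
    by rewrite mem_cat mem_rev -mem_cat.
  by rewrite jnot uw.
set e0 := fun a b => A a b || A b a.
have sym0 : symmetric e0 by move=> a b; rewrite /e0 orbC.
have sub0 : subrel e' e0 by move=> a b /and3P[ab _ _]; rewrite /e0 ab.
have cc : cycle e0 c.
  have H : path e0 j (rcons (rev (w :: p1) ++ p2) j); last exact: H.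
  rewrite rcons_cat cat_path; apply/andP; split.
    rewrite (lastI w p1) rev_rcons lp1 /= {1}/e0 akj orbT /=.
    have := rev_path e0 w p1; rewrite lp1 => ->.
    rewrite (eq_path (e' := e0)); first exact: sub_path pp1.
    by move=> a b; rewrite sym0.
  rewrite rev_cons last_rcons rcons_path lp2 (sub_path sub0 pp2) /= /e0 orbC.
  exact: ajo.
have memc : forall z, (z \in X) = [|| z == j, z \in w :: p1 | z \in p2].
  by move=> z; rewrite inE /c inE mem_cat mem_rev.
have kX : k \in X by rewrite memc -lp1 mem_last orbT.
have jX : j \in X by rewrite memc eqxx.
have oX : o \in X.
  by move: (mem_last w p2); rewrite lp2 memc !inE => /orP[->|->]; rewrite ?orbT.
have WX : k |: [set j; o] \subset X.
  by apply/subsetP => z /setU1P[->//|/set2P[]->].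
have bic : biconnected A X.
  split; [|split].
  - by rewrite -W3; exact: subset_leq_card WX.
  - move=> x y; rewrite !in_set => xc yc; apply: to_uadj. exact (cycle_conn0 sym0 cc xc yc).
  - move=> v; rewrite in_set => vc x y xin yin; apply: to_uadj; exact (cycle_conn sym0 uc cc vc xin yin).

set eX := fun a b => [&& A a b, a \in X & b \in X].
have allX1 : all (mem X) (w :: p1).
  by apply/allP => z zin; have : z \in X by rewrite memc zin orbT.
have allX2 : all (mem X) (w :: p2).
  apply/allP => z zin; have : z \in X; last by [].
  by move: zin; rewrite memc !inE => /orP[->|->]; rewrite ?orbT.
have tok : forall y, y \in w :: p1 -> connect eX y k.
  by move=> y yin; rewrite -lp1; exact: path_to_last (path_restrictA pp1 allX1) yin.
have too : forall y, y \in w :: p2 -> connect eX y o.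
  by move=> y yin; rewrite -lp2; exact: path_to_last (path_restrictA pp2 allX2) yin.
have ekj : eX k j by rewrite /eX /= akj kX jX.
have inXcase : forall z, z \in X -> [\/ z = j, z \in w :: p1 | z \in w :: p2].
  move=> z; rewrite memc => /or3P[/eqP->|?|zp]; [exact: Or31|exact: Or32|].
  by apply: Or33; rewrite inE zp orbT.
have jW : j \in k |: [set j; o] by rewrite !inE eqxx orbT.
have oW : o \in k |: [set j; o] by rewrite !inE eqxx !orbT.
case: (boolP (A o j)) => aoj.
  have eoj : eX o j by rewrite /eX /= aoj oX jX.
  have rX : forall u, u \in X -> u != j -> reach_in A X u j.
    move=> u uX nuj; rewrite /reach_in uX jX /=.
    case: (inXcase u uX) => [uj|u1|u2]; first by rewrite uj eqxx in nuj.
      exact: connect_trans (tok u u1) (connect1 ekj).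
    exact: connect_trans (too u u2) (connect1 eoj).
  exists X; split => //; split; first by split => //; exists j.
  exists j; split => //; split => // u uW nuj; rewrite /reach_in uW jW /=.
  case/setU1P: uW => [->|/set2P[uj|->]]; last 2 first.
  - by rewrite uj eqxx in nuj.
  - by apply: connect1; rewrite /= aoj !inE !eqxx !orbT.
  by apply: connect1; rewrite /= akj !inE !eqxx !orbT.
have ajo' : A j o by move: ajo; rewrite (negbTE aoj) orbF.
have ejo : eX j o by rewrite /eX /= ajo' oX jX.
have rX : forall u, u \in X -> u != o -> reach_in A X u o.
  move=> u uX nuo; rewrite /reach_in uX oX /=.
  case: (inXcase u uX) => [->|u1|u2]; first exact: connect1.
    exact: connect_trans (tok u u1) (connect_trans (connect1 ekj) (connect1 ejo)).
  exact: too.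
exists X; split => //; split; first by split => //; exists o.
exists o; split => //; split => // u uW nuo; rewrite /reach_in uW oW /=.
case/setU1P: uW => [->|/set2P[->|huo]].
- apply: (connect_trans (y := j)); apply: connect1; by rewrite /= ?akj ?ajo' !inE !eqxx !orbT.
- by apply: connect1; rewrite /= ajo' !inE !eqxx !orbT.
by rewrite huo eqxx in nuo.
Qed.

Lemma chain3 (V : finType) (A : rel V) X Y : gen_chain A X Y -> #|Y| = #|X|.+1 -> gen_step A X Y.
Proof.
case=> [//|X0 Y0 Z ch st]; have := chain_card ch; rewrite (step_card st) => lt /eqP.
by rewrite eqSS => /eqP e; rewrite e ltnn in lt.
Qed.

Theorem mainTheorem6 (V : finType) (A : rel V) (W : {set V}) :
  #|W| = 3 ->
  (exists P : {set V}, connected_pair A P /\ generated_from A P W) ->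
  exists X : {set V}, W \subset X /\ directed_subblock A X /\
    exists i, i \in W /\
      (forall u, u \in W -> u != i -> reach_in A W u i) /\
      (forall u, u \in X -> u != i -> reach_in A X u i).
Proof.
move=> W3 [P [[a [b [nab [EP ab]]]] [_ [_ ch]]]].
have cP : #|P| = 2 by rewrite EP cards2 nab.
have := chain3 ch; rewrite W3 cP => /(_ erefl) [k [kP [EW [j [jP [akj ndp]]]]]].
subst W; subst P.
have nkj : k != j by apply: contraNneq kP => ->.
case/set2P: jP => ej; subst j.
- have nkb : k != b by apply: contraNneq kP => ->; rewrite !inE eqxx orbT.
  have e1 : [set a; b] :\ a = [set b] by rewrite setU1K // inE.
  rewrite e1 in ndp.
  exact: core nab ab nkj nkb akj ndp W3.
- have nka : k != a by apply: contraNneq kP => ->; rewrite !inE eqxx.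
  rewrite (_ : [set a; b] = [set b; a]) in ndp W3 * ; last by rewrite setUC.
  have e2 : [set b; a] :\ b = [set a] by rewrite setU1K // inE eq_sym.
  rewrite e2 in ndp.
  by apply: core => //; rewrite ?(eq_sym b) // orbC.
Qed.
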